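(* For any positive integer $T$, $x \in \{0,1\}^T$, $p \in [0,1]^T$, $m = |\{p_1,\ldots,p_T\}|$ and $\epsilon > 0$, there exist a set $S \subset [0,1]$ of size at most $2m+3$ and distributions $\mathcal{D}_1,\ldots,\mathcal{D}_T$ supported on $S$ such that $\mathcal{D} = (\mathcal{D}_1,\ldots,\mathcal{D}_T) \in \underline{\mathcal{C}}(x)$ and $\|p - \mathcal{D}\|_1 \le 20\cdot \mathsf{LowerCalDist}(x,p) + \epsilon$.
   Context: Let $\underline{\mathcal{C}}(x)$ be the set of $T$-tuples $\mathcal{D} = (\mathcal{D}_1,\ldots,\mathcal{D}_T)$ of probability distributions, each with finite support contained in $[0,1]$, such that $\sum_{t=1}^T (x_t - \alpha)\mathcal{D}_t(\alpha) = 0$ for every $\alpha \in [0,1]$. For such $\mathcal{D}$, $\|p - \mathcal{D}\|_1 = \sum_{t=1}^T \mathbb{E}_{q_t \sim \mathcal{D}_t}|p_t - q_t|$, and $\mathsf{LowerCalDist}(x,p) = \inf_{\mathcal{D} \in \underline{\mathcal{C}}(x)} \|p - \mathcal{D}\|_1$. *)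

(* Defs.v *)
From HB Require Import structures.
From mathcomp Require Import all_boot all_order all_algebra.
From mathcomp Require Import finmap.
From mathcomp Require Import all_classical all_reals.
Set Implicit Arguments. Unset Strict Implicit. Unset Printing Implicit Defensive.
Import Order.TTheory GRing.Theory Num.Theory.
Local Open Scope ring_scope.
Local Open Scope fset_scope.

(* A probability distribution with finite support on the reals is represented
   by its probability mass function, a finitely supported function
   D : {fsfun R -> R with 0}; its support is [finsupp D]. *)
Definition fdist (R : realType) (D : {fsfun R -> R with 0}) : Prop :=
  (forall a, 0 <= D a) /\ \sum_(a <- finsupp D) D a = 1.

Definition fdist01 (R : realType) (D : {fsfun R -> R with 0}) : Prop :=
  fdist D /\ (forall a, a \in finsupp D -> 0 <= a <= 1).

Definition lowerCal (R : realType) (T : nat) (x : 'I_T -> R)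
    (D : 'I_T -> {fsfun R -> R with 0}) : Prop :=
  (forall t, fdist01 (D t)) /\
  (forall alpha : R, 0 <= alpha <= 1 ->
     \sum_(t < T) (x t - alpha) * D t alpha = 0).

Definition dist1 (R : realType) (T : nat) (p : 'I_T -> R)
    (D : 'I_T -> {fsfun R -> R with 0}) : R :=
  \sum_(t < T) \sum_(a <- finsupp (D t)) D t a * `|p t - a|.

Definition LowerCalDist (R : realType) (T : nat) (x p : 'I_T -> R) : R :=
  inf [set dist1 p D | D in [set D | lowerCal x D]]%classic.

(* Main.v *)
Require Import Defs.
From HB Require Import structures.
From mathcomp Require Import all_boot all_order all_algebra.
From mathcomp Require Import finmap.
From mathcomp Require Import all_classical all_reals.
From mathcomp Require Import ring lra zify.
From Stdlib Require Import Lia.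
Import Order.TTheory GRing.Theory Num.Theory.
Local Open Scope ring_scope.
Lemma kernel_exists (F : fieldType) (X Q : finType) (M : X -> Q -> F) :
  (#|Q| < #|X|)%N ->
  exists z : X -> F, (exists e, z e != 0) /\ forall q, \sum_e z e * M e q = 0.
Proof.
move=> hQX.
pose A : 'M[F]_(#|X|, #|Q|) := \matrix_(i, j) M (enum_val i) (enum_val j).
have kA : kermx A != 0.
  rewrite -mxrank_eq0 mxrank_ker subn_eq0 -ltnNge.
  exact: leq_ltn_trans (rank_leq_col A) hQX.
have /existsP [i /existsP [j hij]] : [exists i, [exists j, kermx A i j != 0]].
  apply: contraNT kA => /existsPn H; apply/eqP/matrixP => i j; rewrite [RHS]mxE.
  by have /existsPn /(_ j) := H i; rewrite negbK => /eqP.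
pose v := row i (kermx A).
exists (fun e => v ord0 (enum_rank e)); split.
  by exists (enum_val j); rewrite enum_valK mxE.
move=> q.
have h0 : v *m A = 0 by rewrite /v -row_mul mulmx_ker row0.
have E : \sum_k v ord0 k * A k (enum_rank q) = 0.
  by have := congr1 (fun m : 'M[F]_(1, #|Q|) => m ord0 (enum_rank q)) h0; rewrite !mxE.
rewrite -[RHS]E (reindex (@enum_rank X)) /=; last first.
  by exists enum_val => y _; rewrite ?enum_valK ?enum_rankK.
by apply: eq_bigr => k _; rewrite !mxE !enum_rankK.
Qed.

Section Reduce.
Variables (R : realType) (I J : finType) (w b v : I -> R) (a : J -> R).
Hypotheses (w_gt0 : forall c, 0 < w c) (b01 : forall c, b c = 0 \/ b c = 1).

Definition feas (Y : I -> J -> R) :=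
  [/\ forall c j, 0 <= Y c j, forall c, \sum_j Y c j = 1 &
      forall j, \sum_c w c * (b c - a j) * Y c j = 0].
Definition cost (Y : I -> J -> R) := \sum_c w c * \sum_j Y c j * `|v c - a j|.
Definition npos (Y : I -> J -> R) := #|[pred e : I * J | 0 < Y e.1 e.2]|.
Definition usedb (Y : I -> J -> R) j := [exists c, 0 < Y c j].
Definition nint (Y : I -> J -> R) := #|[pred j | (0 < a j < 1) && usedb Y j]|.

Lemma sum_gt0_of (K : finType) (f : K -> R) k :
  (forall i, 0 <= f i) -> 0 < f k -> 0 < \sum_i f i.
Proof.
move=> h0 hk; rewrite (bigD1 k) //=.
have : 0 <= \sum_(i | i != k) f i by apply: sumr_ge0.
lra.
Qed.

Lemma two_classes Y j : feas Y -> 0 < a j < 1 -> usedb Y j ->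
  exists c0 c1, [/\ 0 < Y c0 j, 0 < Y c1 j, b c0 = 0 & b c1 = 1].
Proof.
case=> Y0 _ Yb /andP[a0 a1] /existsP[c hc].
have HB := Yb j.
have [c0 [h0 hb0]] : exists c0, 0 < Y c0 j /\ b c0 = 0.
  apply/not_existsP => H.
  have : 0 < \sum_c w c * (b c - a j) * Y c j; last by rewrite HB ltxx.
  apply: (@sum_gt0_of _ _ c).
    move=> i; have := Y0 i j; rewrite le_eqVlt => /orP[/eqP <-|hp].
      by rewrite mulr0.
    case: (b01 i) => hb; first by exfalso; apply: (H i).
    by rewrite hb; apply: mulr_ge0 => //; apply: mulr_ge0; [exact: ltW|lra].
  case: (b01 c) => hb; first by exfalso; apply: (H c).
  by rewrite hb; apply: mulr_gt0 => //; apply: mulr_gt0 => //; lra.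
have [c1 [h1 hb1]] : exists c1, 0 < Y c1 j /\ b c1 = 1.
  apply/not_existsP => H.
  have : 0 < \sum_c - (w c * (b c - a j) * Y c j); last first.
    by rewrite sumrN HB oppr0 ltxx.
  apply: (@sum_gt0_of _ _ c).
    move=> i; have := Y0 i j; rewrite le_eqVlt => /orP[/eqP <-|hp].
      by rewrite mulr0 oppr0.
    case: (b01 i) => hb; last by exfalso; apply: (H i).
    rewrite hb -mulNr; apply: mulr_ge0 => //; rewrite -mulrN.
    by apply: mulr_ge0; [exact: ltW|lra].
  case: (b01 c) => hb; last by exfalso; apply: (H c).
  rewrite hb -mulNr; apply: mulr_gt0 => //; rewrite -mulrN.
  by apply: mulr_gt0 => //; lra.
by exists c0, c1.
Qed.

Lemma card_sum_nat (K : finType) (P : pred K) : #|P| = (\sum_k (P k : nat))%N.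
Proof. rewrite -sum1_card big_mkcond /=; apply: eq_bigr => k _; by rewrite unfold_in; case: (P k). Qed.

Lemma count_pos Y : feas Y ->
  (#|[pred j | usedb Y j]| + nint Y <= npos Y)%N.
Proof.
move=> fY; rewrite /nint /npos !card_sum_nat -big_split /=.

rewrite -(pair_big xpredT xpredT (fun c j => nat_of_bool (0 < Y c j)%R)) /= exchange_big /=.
apply: leq_sum => j _.
case: (boolP (usedb Y j)) => hu /=; last by rewrite andbF.
case: (boolP (0 < a j < 1)) => hi /=.
  have [c0 [c1 [h0 h1 hb0 hb1]]] := @two_classes Y j fY hi hu.
  have hne : c1 != c0 by apply/eqP => E; move: hb1; rewrite E hb0 => /eqP; rewrite eq_sym oner_eq0.
  rewrite (bigD1 c0) // (bigD1 c1) /=; last by rewrite hne.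
  by rewrite h0 h1.
case/existsP: hu => c hc.
by rewrite (bigD1 c) //= hc.
Qed.

Lemma step_dir Y Z : feas Y ->
  (forall c j, Z c j != 0 -> 0 < Y c j) ->
  (forall c, \sum_j Z c j = 0) ->
  (forall j, \sum_c w c * (b c - a j) * Z c j = 0) ->
  (exists c j, Z c j != 0) ->
  \sum_c w c * (\sum_j Z c j * `|v c - a j|) <= 0 ->
  exists Y', [/\ feas Y', cost Y' <= cost Y & (npos Y' < npos Y)%N].
Proof.
case=> Y0 Ys Yb Zsupp Zs Zb [c0 [j0 hz]] Zc.
have [j1 hj1] : exists j1, Z c0 j1 < 0.
  apply/not_existsP => H.
  have hge : forall j, 0 <= Z c0 j.
    by move=> j; rewrite leNgt; apply/negP => h; apply: (H j).
  have := @psumr_eq0P _ _ xpredT (Z c0) (fun j _ => hge j) (Zs c0) j0 isT.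
  by move/eqP; rewrite (negbTE hz).
pose P := fun e : I * J => Z e.1 e.2 < 0.
pose F := fun e : I * J => Y e.1 e.2 / - Z e.1 e.2.
have P0 : P (c0, j1) by [].
case: (@arg_minP _ R _ (c0, j1) P F P0) => es Pes Hmin.
pose s := F es.
have FK : forall e, P e -> F e * - Z e.1 e.2 = Y e.1 e.2.
  by move=> e Pe; rewrite /F divfK //; rewrite oppr_eq0; apply: ltr0_neq0.
have s0 : 0 <= s.
  by rewrite /s /F; apply: divr_ge0 => //; rewrite oppr_ge0; apply: ltW.
pose Y' := fun c j => Y c j + s * Z c j.
have Y'0 : forall c j, 0 <= Y' c j.
  move=> c j; rewrite /Y'; case: (lerP 0 (Z c j)) => hZ.
    by apply: addr_ge0 => //; apply: mulr_ge0.
  have Pcj : P (c, j) by [].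
  have := Hmin (c, j) Pcj; rewrite -/s => hs.
  have := FK _ Pcj => /= hF.
  have : s * - Z c j <= F (c, j) * - Z c j.
    by apply: ler_wpM2r => //; rewrite oppr_ge0 ltW.
  rewrite hF; lra.
exists Y'; split.
- split => //.
  + by move=> c; rewrite /Y' big_split /= -mulr_sumr Zs Ys mulr0 addr0.
  + move=> j; rewrite /Y'.
    transitivity (\sum_c w c * (b c - a j) * Y c j + s * \sum_c w c * (b c - a j) * Z c j).
      by rewrite mulr_sumr -big_split /=; apply: eq_bigr => c _; ring.
    by rewrite Yb Zb mulr0 addr0.
- have -> : cost Y' = \sum_c w c * (\sum_j Y c j * `|v c - a j|) + s * \sum_c w c * (\sum_j Z c j * `|v c - a j|).
    rewrite /cost /Y' mulr_sumr -big_split /=; apply: eq_bigr => c _.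
    rewrite (eq_bigr (fun j => Y c j * `|v c - a j| + s * (Z c j * `|v c - a j|))); last first.
      by move=> j _; ring.
    by rewrite big_split /= -mulr_sumr; ring.
  have : s * \sum_c w c * (\sum_j Z c j * `|v c - a j|) <= 0 by apply: mulr_ge0_le0.
  rewrite /cost; lra.
- apply: proper_card; apply/properP; split.

    apply/fintype.subsetP => e; rewrite !inE /Y' => he.
    case: (eqVneq (Z e.1 e.2) 0) => hZ; last exact: Zsupp.
    by move: he; rewrite hZ mulr0 addr0.
  have hZes : Z es.1 es.2 != 0 by apply: ltr0_neq0.
  exists es; rewrite !inE; first exact: Zsupp.
  rewrite /Y' -/(F es).
  have := FK _ Pes; rewrite -/s => hF.
  have -> : Y es.1 es.2 + s * Z es.1 es.2 = 0 by rewrite -hF; ring.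
  by rewrite ltxx.
Qed.

Lemma step Y : feas Y -> (#|I| < nint Y)%N ->
  exists Y', [/\ feas Y', cost Y' <= cost Y & (npos Y' < npos Y)%N].
Proof.
move=> fY hint.
have hcnt := @count_pos Y fY.
pose X : finType := {e : I * J | (0 < Y e.1 e.2)%R}.
pose Q : finType := (I + {j : J | usedb Y j})%type.
pose G := fun (p : I * J) (q : Q) => match q with
  | inl c => ((p.1 == c)%:R : R)
  | inr j => (p.2 == val j)%:R * (w p.1 * (b p.1 - a p.2)) end.
have hQX : (#|Q| < #|X|)%N.
  rewrite card_sum !card_sig /npos.
  move: hcnt hint; rewrite /npos /nint; set u := #|_|; set n := #|_|; set m := #|_|.

  lia.
have [z [[e0 hz0] hz]] := @kernel_exists R X Q (fun e q => G (val e) q) hQX.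
pose Z := fun c j => \sum_(e : X | val e == (c, j)) z e.
have transfer : forall g : I * J -> R,
    \sum_e z e * g (val e) = \sum_c \sum_j Z c j * g (c, j).
  move=> g.
  rewrite (pair_big xpredT xpredT (fun c j => Z c j * g (c, j))) /=.
  transitivity (\sum_(p : I * J) \sum_e (if val e == p then z e * g (val e) else 0)).
    rewrite exchange_big /=; apply: eq_bigr => e _.
    by rewrite -big_mkcond /= (big_pred1 (val e)) // => p /=; rewrite eq_sym.
  apply: eq_big => // -[c j] _ /=.
  rewrite /Z mulr_suml [RHS]big_mkcond /=.
  apply: eq_big => // e _; case: eqP => // ->; by [].
have Zsupp : forall c j, Z c j != 0 -> 0 < Y c j.
  move=> c j; apply: contraNT => hY; rewrite /Z big_pred0 // => e.
  apply/negP => /eqP he; move: (valP e); rewrite he /=.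
  by move: hY => /negPf ->.
have Zs : forall c, \sum_j Z c j = 0.
  move=> c; have := hz (inl c); rewrite (transfer (fun p => G p (inl c))) /= => H.
  rewrite -[RHS]H [RHS](bigD1 c) //=.
  rewrite [X in _ = _ + X]big1; last first.
    by move=> c' hc'; apply: big1 => j _; rewrite (negbTE hc') mulr0.
  by rewrite addr0; apply: eq_big => // j _; rewrite eqxx mulr1.
have Zb : forall j, \sum_c w c * (b c - a j) * Z c j = 0.
  move=> j; case: (boolP (usedb Y j)) => hu.
    have := hz (inr (exist _ j hu)); rewrite (transfer (fun p => G p (inr (exist _ j hu)))) /= => H.
    rewrite -[RHS]H; apply: eq_big => // c _.
    rewrite (bigD1 j) //= big1 ?addr0; last first.
      by move=> j' hj'; rewrite (negbTE hj') mul0r mulr0.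
    by rewrite eqxx /= mul1r mulrC.
  apply: big1 => c _.
  have -> : Z c j = 0.
    apply/eqP; apply: contraNT hu => hZ; apply/existsP; exists c; exact: Zsupp.
  by rewrite mulr0.
have Znz : exists c j, Z c j != 0.
  exists (val e0).1, (val e0).2.
  rewrite /Z -surjective_pairing (big_pred1 e0) // => e /=.
pose CZ := \sum_c w c * (\sum_j Z c j * `|v c - a j|).
case: (lerP CZ 0) => hCZ.
  exact: (@step_dir Y Z fY Zsupp Zs Zb Znz hCZ).
apply: (@step_dir Y (fun c j => - Z c j) fY).
- by move=> c j; rewrite oppr_eq0; exact: Zsupp.
- by move=> c; rewrite sumrN Zs oppr0.
- move=> j; under eq_bigr => c _ do rewrite mulrN.
  by rewrite sumrN Zb oppr0.
- by case: Znz => c [j h]; exists c, j; rewrite oppr_eq0.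
- rewrite (eq_bigr (fun c => - (w c * (\sum_j Z c j * `|v c - a j|)))).
    by rewrite sumrN -/CZ oppr_le0 ltW.
  by move=> c _; rewrite -mulrN -sumrN; congr (_ * _); apply: eq_big => // j _; rewrite mulNr.
Qed.

Lemma reduce Y : feas Y ->
  exists Y', [/\ feas Y', cost Y' <= cost Y & (nint Y' <= #|I|)%N].
Proof.
have [n hn] : exists n, (npos Y <= n)%N by exists (npos Y).
elim: n Y hn => [|n IH] Y hn fY.
  case: (leqP (nint Y) #|I|) => h; first by exists Y.
  have [Y1 [_ _ h1]] := @step Y fY h.
  by move: h1; rewrite ltnNge (leq_trans hn (leq0n _)).
case: (leqP (nint Y) #|I|) => h; first by exists Y.
have [Y1 [f1 c1 h1]] := @step Y fY h.
have [Y2 [f2 c2 h2]] := IH Y1 (leq_trans (leq_trans h1 hn) (leqnn _)) f1.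
by exists Y2; split => //; exact: le_trans c2 c1.
Qed.

End Reduce.


Local Open Scope fset_scope.

Lemma fsum_incl (R : realType) (f : {fsfun R -> R with 0}) (A : {fset R}) (g : R -> R) :
  finsupp f `<=` A ->
  \sum_(a <- finsupp f) f a * g a = \sum_(j : A) f (val j) * g (val j).
Proof.
move=> hs; rewrite (big_fset_incl _ hs); last first.
  by move=> y _ hy; rewrite fsfun_dflt // mul0r.
by rewrite big_seq_fsetE.
Qed.

Section Conv.
Variables (R : realType) (T : nat) (x p : 'I_T -> R) (Ds : 'I_T -> {fsfun R -> R with 0}).
Hypotheses (x01 : forall t, x t = 0 \/ x t = 1) (hDs : lowerCal x Ds).

Definition A : {fset R} := \bigcup_(t <- enum 'I_T) finsupp (Ds t).
Definition cl := undup [seq (p t, x t) | t <- enum 'I_T].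
Definition C := size cl.

Lemma cls_lt t : (index (p t, x t) cl < C)%N.
Proof. by rewrite index_mem mem_undup; apply: map_f; rewrite mem_enum. Qed.

Definition cls t : 'I_C := Ordinal (cls_lt t).
Definition vv (c : 'I_C) := (nth (0, 0) cl c).1.
Definition bb (c : 'I_C) := (nth (0, 0) cl c).2.
Definition ww (c : 'I_C) : R := #|[pred t | cls t == c]|%:R.

Lemma cls_nth t : nth (0, 0) cl (cls t) = (p t, x t).
Proof. by rewrite /= nth_index // mem_undup; apply: map_f; rewrite mem_enum. Qed.

Lemma vv_cls t : vv (cls t) = p t. Proof. by rewrite /vv cls_nth. Qed.
Lemma bb_cls t : bb (cls t) = x t. Proof. by rewrite /bb cls_nth. Qed.

Lemma cls_surj (c : 'I_C) : exists t, cls t = c.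
Proof.
have : nth (0, 0) cl c \in cl by apply: mem_nth.
rewrite mem_undup => /mapP [t _ ht].
exists t; apply: val_inj => /=; rewrite -ht index_uniq //; exact: undup_uniq.
Qed.

Lemma ww_gt0 c : 0 < ww c.
Proof.
rewrite /ww ltr0n; apply/card_gt0P; have [t ht] := cls_surj c.
by exists t; rewrite inE ht.
Qed.

Lemma bb01 c : bb c = 0 \/ bb c = 1.
Proof. by have [t <-] := cls_surj c; rewrite bb_cls. Qed.

Lemma part_sum (F : 'I_T -> R) : \sum_t F t = \sum_c \sum_(t | cls t == c) F t.
Proof. by rewrite (partition_big cls xpredT). Qed.

Lemma sum_const_cls c (k : R) : \sum_(t | cls t == c) k = ww c * k.
Proof.
transitivity (\sum_(t in [pred t | cls t == c]) k).
  by apply: eq_bigl => t; rewrite inE.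
by rewrite sumr_const /ww mulr_natl.
Qed.

Lemma supp_A t : finsupp (Ds t) `<=` A.
Proof. by apply: bigfcup_sup; rewrite ?mem_enum. Qed.

Lemma A01 a : a \in A -> 0 <= a <= 1.
Proof.
case/bigfcupP => t _ ha; case: hDs => h _; case: (h t) => _; exact.
Qed.

Lemma Ds_ge0 t a : 0 <= Ds t a.
Proof. by case: hDs => h _; case: (h t) => [[]]. Qed.

Lemma Ds_sumJ t (g : R -> R) :
  \sum_(a <- finsupp (Ds t)) Ds t a * g a = \sum_(j : A) Ds t (val j) * g (val j).
Proof. exact: fsum_incl (supp_A t). Qed.

Lemma Ds_sum1 t : \sum_(j : A) Ds t (val j) = 1.
Proof.
case: hDs => h _; case: (h t) => [[_ hs] _].
have := Ds_sumJ t (fun _ => 1).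
under eq_bigr do rewrite mulr1.
under [X in _ = X -> _]eq_bigr do rewrite mulr1.
by rewrite hs => <-.
Qed.

Definition Y (c : 'I_C) (j : A) : R := (ww c)^-1 * \sum_(t | cls t == c) Ds t (val j).

Lemma feasY : feas _ _ _ ww bb (fun j : A => val j) Y.
Proof.
split.
- move=> c j; apply: mulr_ge0; first by rewrite invr_ge0 ltW // ww_gt0.
  by apply: sumr_ge0 => t _; apply: Ds_ge0.
- move=> c; rewrite /Y -mulr_sumr exchange_big /=.
  under eq_bigr do rewrite Ds_sum1.
  by rewrite sum_const_cls mulr1 mulVf // gt_eqF // ww_gt0.
- move=> j.
  transitivity (\sum_t (x t - val j) * Ds t (val j)); last first.
    by case: hDs => _ h; apply: h; apply: A01; exact: valP.
  rewrite part_sum; apply: eq_bigr => c _.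
  rewrite /Y -mulrA [(bb c - _) * _]mulrCA !mulrA mulfV ?gt_eqF ?ww_gt0 // mul1r mulr_sumr.
  by apply: eq_bigr => t /eqP <-; rewrite bb_cls.
Qed.

Lemma costY : cost _ _ _ ww vv (fun j : A => val j) Y = dist1 p Ds.
Proof.
rewrite /cost /dist1.
under [RHS]eq_bigr do rewrite Ds_sumJ.
rewrite [RHS]part_sum; apply: eq_bigr => c _.
rewrite exchange_big /= mulr_sumr; apply: eq_bigr => j _.
rewrite /Y mulrA mulrA mulfV ?gt_eqF ?ww_gt0 // mul1r mulr_suml.
by apply: eq_bigr => t /eqP <-; rewrite vv_cls.
Qed.

Lemma conv_main : exists (S : {fset R}) (D : 'I_T -> {fsfun R -> R with 0}),
  [/\ (forall a, a \in S -> 0 <= a <= 1), (#|` S| <= C + 2)%N,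
      (forall t, finsupp (D t) `<=` S), lowerCal x D & dist1 p D <= dist1 p Ds].
Proof.
have [Y' [[Y0 Ys Yb] hc hn]] :=
  @reduce R 'I_C A ww bb vv (fun j : A => val j) ww_gt0 bb01 Y feasY.
pose D t : {fsfun R -> R with 0} := [fsfun j : A => Y' (cls t) j].
have Dval : forall t (j : A), D t (val j) = Y' (cls t) j.
  by move=> t j; rewrite /D fsfun_ffun valK.
have Dout : forall t a, a \notin A -> D t a = 0.
  by move=> t a ha; rewrite /D fsfun_ffun insubF //; apply/negbTE.
have Dge0 : forall t a, 0 <= D t a.
  by move=> t a; rewrite /D fsfun_ffun; case: insubP => //= j _ _; exact: Y0.
have Dsupp : forall t, finsupp (D t) `<=` A by move=> t; apply: finsupp_sub.
have DsumJ : forall t g, \sum_(a <- finsupp (D t)) D t a * g a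
    = \sum_(j : A) D t (val j) * g (val j).
  by move=> t g; apply: fsum_incl.
pose l := [seq val j | j <- enum [pred j : A | (0 < val j < 1) && usedb _ _ _ Y' j]].
pose S := seq_fset tt (l ++ [:: 0; 1]).
exists S, D; split.
- move=> a; rewrite seq_fsetE mem_cat => /orP[/mapP [j _ ->]|].
    by apply: A01; exact: valP.
  by rewrite !inE => /orP[/eqP->|/eqP->]; rewrite ?lexx ?ler01.
- rewrite size_seq_fset; apply: leq_trans (size_undup _) _.
  rewrite size_cat size_map /= -cardE leq_add2r.
  by apply: leq_trans hn _; rewrite card_ord.
- move=> t; apply/fsubsetP => a ha.
  have haA : a \in A := fsubsetP (Dsupp t) a ha.
  pose j : A := [` haA].
  have ea : a = val j by [].
  have hpos : 0 < Y' (cls t) j.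
    rewrite lt_neqAle Y0 andbT eq_sym -Dval -ea.
    by move: ha; rewrite mem_finsupp.
  have hu : usedb _ _ _ Y' j by apply/existsP; exists (cls t).
  rewrite seq_fsetE mem_cat; apply/orP.
  case: (boolP (0 < a < 1)) => hi.
    by left; apply/mapP; exists j => //; rewrite mem_enum inE -ea hi hu.
  right; move: (@A01 a haA) hi; case/andP => h0 h1.
  rewrite negb_and -!leNgt => /orP[ha0|ha1]; rewrite !inE.
    by apply/orP; left; apply/eqP; apply: le_anti; rewrite ha0 h0.
  by apply/orP; right; apply/eqP; apply: le_anti; rewrite ha1 h1.
- split.
  + move=> t; split; [split|].
    * exact: Dge0.
    * have := DsumJ t (fun _ => 1).
      under eq_bigr do rewrite mulr1.
      under [X in _ = X -> _]eq_bigr do rewrite mulr1 Dval.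
      by rewrite Ys.
    * move=> a ha; apply: A01; exact: (fsubsetP (Dsupp t)).
  + move=> al hal; case: (boolP (al \in A)) => ha; last first.
      by apply: big1 => t _; rewrite Dout // mulr0.
    pose j : A := [` ha].
    have -> : al = val j by [].
    under eq_bigr do rewrite Dval.
    rewrite part_sum; transitivity (\sum_c ww c * (bb c - val j) * Y' c j); last exact: Yb.
    apply: eq_bigr => c _.
    transitivity (\sum_(t | cls t == c) (bb c - val j) * Y' c j).
      by apply: eq_bigr => t /eqP <-; rewrite bb_cls.
    by rewrite sum_const_cls mulrA.
- rewrite -costY; apply: le_trans hc; rewrite le_eqVlt; apply/orP; left; apply/eqP.
  rewrite /dist1 /cost.
  under eq_bigr do rewrite DsumJ.
  rewrite part_sum; apply: eq_bigr => c _.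
  transitivity (\sum_(t | cls t == c) \sum_(j : A) Y' c j * `|vv c - val j|).
    by apply: eq_bigr => t /eqP <-; apply: eq_bigr => j _; rewrite Dval vv_cls.
  by rewrite sum_const_cls.
Qed.

End Conv.

Lemma C_bound (R : realType) (T : nat) (x p : 'I_T -> R) :
  (forall t, x t = 0 \/ x t = 1) ->
  (size (undup [seq (p t, x t) | t <- enum 'I_T])
     <= 2 * size (undup [seq p t | t <- enum 'I_T]))%N.
Proof.
move=> x01; set U := undup [seq p t | t <- enum 'I_T].
apply: (@leq_trans (size ([seq (u, 0) | u <- U] ++ [seq (u, 1) | u <- U]))).
  apply: uniq_leq_size; first exact: undup_uniq.
  move=> z; rewrite mem_undup => /mapP [t _ ->]; rewrite mem_cat.
  have hp : p t \in U by rewrite mem_undup; apply: map_f; rewrite mem_enum.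
  case: (x01 t) => ->; apply/orP; [left|right]; exact: (map_f (fun u => (u, _)) hp).
by rewrite size_cat !size_map mul2n addnn.
Qed.

Lemma dist1_ge0 (R : realType) (T : nat) (x p : 'I_T -> R) D :
  lowerCal x D -> 0 <= dist1 p D.
Proof.
case=> h _; apply: sumr_ge0 => t _; apply: sumr_ge0 => a _.
by apply: mulr_ge0 => //; case: (h t) => [[]].
Qed.

Lemma lowerCal_ex (R : realType) (T : nat) (x : 'I_T -> R) :
  (0 < T)%N -> (forall t, x t = 0 \/ x t = 1) -> exists D, lowerCal x D.
Proof.
move=> hT x01.
pose mu := (\sum_t x t) / T%:R.
have hT' : (T%:R : R) != 0 by rewrite pnatr_eq0 -lt0n.
have hTp : (0 : R) < T%:R by rewrite ltr0n.
have xs0 : 0 <= \sum_t x t by apply: sumr_ge0 => t _; case: (x01 t) => ->; rewrite ?ler01.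
have xs1 : \sum_t x t <= T%:R.
  rewrite -[X in _ <= X%:R]card_ord -sumr_const; apply: ler_sum => t _.
  by case: (x01 t) => ->; rewrite ?ler01.
have mu01 : 0 <= mu <= 1.
  apply/andP; split; first by apply: divr_ge0 => //; apply: ltW.
  by rewrite ler_pdivrMr // mul1r.
pose D0 : {fsfun R -> R with 0} := [fsfun a in [fset mu] => 1].
have D0E : forall a, D0 a = if a \in [fset mu] then 1 else 0.
  by move=> a; rewrite /D0 fsfun_fun.
have hsub : finsupp D0 `<=` [fset mu].
  apply/fsubsetP => a; rewrite mem_finsupp D0E; case: ifP => // _.
  by rewrite eqxx.
exists (fun _ => D0); split.
- move=> t; split; [split|].
  + by move=> a; rewrite D0E; case: ifP; rewrite ?ler01.
  + rewrite (big_fset_incl _ hsub); last by move=> y _ hy; rewrite fsfun_dflt.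
    by rewrite big_seq_fset1 D0E in_fset1 eqxx.
  + move=> a /(fsubsetP hsub); rewrite in_fset1 => /eqP ->; exact: mu01.
- move=> al _; rewrite D0E; case: ifP => ha; last by apply: big1 => t _; rewrite mulr0.
  move: ha; rewrite in_fset1 => /eqP ->.
  under eq_bigr do rewrite mulr1.
  rewrite sumrB sumr_const card_ord /mu -mulr_natl.
  by field.
Qed.

Theorem lemma4 (R : realType) (T : nat) (x p : 'I_T -> R) (eps : R) :
  (0 < T)%N ->
  (forall t, x t = 0 \/ x t = 1) ->
  (forall t, 0 <= p t <= 1) ->
  0 < eps ->
  exists (S : {fset R}) (D : 'I_T -> {fsfun R -> R with 0}),
    [/\ (forall a, a \in S -> 0 <= a <= 1),
        (#|` S| <= 2 * size (undup [seq p t | t <- enum 'I_T]) + 3)%N,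
        (forall t, finsupp (D t) `<=` S),
        lowerCal x D &
        (dist1 p D <= 20 * LowerCalDist x p + eps)%R].
Proof.
move=> hT x01 p01 heps.
set E := [set dist1 p D | D in [set D | lowerCal x D]]%classic.
have [D0 hD0] := @lowerCal_ex R T x hT x01.
have hne : E (dist1 p D0) by exists D0.
have lb : lbound E 0.
  move=> y; rewrite /E /= => hy; case: hy => D hD hy; rewrite -hy; exact: (@dist1_ge0 R T x p D hD).
have hinf : has_inf E by split; [exists (dist1 p D0) | exists 0].
have [d [Ds hDs <-] hd] := inf_adherent heps hinf.
have inf0 : 0 <= inf E by apply: lb_le_inf => //; exists (dist1 p D0).
have [S [D [h1 h2 h3 h4 h5]]] := @conv_main R T x p Ds x01 hDs.
exists S, D; split => //.
- apply: leq_trans h2 _; rewrite /C /cl.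
  have := @C_bound R T x p x01; lia.
- rewrite /LowerCalDist -/E; lra.
Qed.
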